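(* Let $(K,\mathrm{val})$ be a valued field whose residue class field $F$ has characteristic two, and assume every strict unit admits a square root in $K$. Let $A$ be a subring with $B\subseteq A\subseteq K$. Then every $x\in K^\times\setminus B^\times$ can be written as $x=u^2+v^2$ with $u,v\in K$ and $\mathrm{val}(u)=\mathrm{val}(v)=\min\{e,\mathrm{val}(x)\}$. Moreover, if $x\in A$, then $u$ and $v$ can be chosen in $A$.
   Context: Let $(G,\le)$ be a totally ordered abelian group written multiplicatively with identity $e$. Let $(K,\mathrm{val})$ be a valued field with surjective valuation $\mathrm{val}:K\to G\cup\{\infty\}$, valuation ring $B=\{x:\mathrm{val}(x)\ge e\}$ (so $B^\times=\{x:\mathrm{val}(x)=e\}$), residue map $\pi:B\to F$, residue field $F$. A strict unit is $x\in B^\times$ with $\pi(x)=1$. *)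

(* Defs.v *)
From HB Require Import structures.
From mathcomp Require Import all_boot all_order all_algebra.
Set Implicit Arguments. Unset Strict Implicit. Unset Printing Implicit Defensive.
Import Order.TTheory GRing.Theory Num.Theory.
Local Open Scope ring_scope.

Definition is_ordered_abgroup (d : Order.disp_t) (G : orderType d)
    (gmul : G -> G -> G) (e : G) (ginv : G -> G) : Prop :=
  [/\ (forall a b c, gmul a (gmul b c) = gmul (gmul a b) c),
      (forall a b, gmul a b = gmul b a),
      (forall a, gmul e a = a),
      (forall a, gmul (ginv a) a = e) &
      (forall a b c, (a <= b)%O -> (gmul c a <= gmul c b)%O)].

(* G ∪ {∞} is modelled by [option G], with [None] = ∞ (the top element). *)
Definition ole (d : Order.disp_t) (G : orderType d) (a b : option G) : Prop :=
  match a, b with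
  | _, None => True
  | None, Some _ => False
  | Some x, Some y => (x <= y)%O
  end.

Definition omul (d : Order.disp_t) (G : orderType d) (gmul : G -> G -> G)
    (a b : option G) : option G :=
  match a, b with
  | Some x, Some y => Some (gmul x y)
  | _, _ => None
  end.

Definition omin (d : Order.disp_t) (G : orderType d) (a b : option G) : option G :=
  match a, b with
  | None, _ => b
  | _, None => a
  | Some x, Some y => Some (Order.min x y)
  end.

Definition is_valuation (K : fieldType) (d : Order.disp_t) (G : orderType d)
    (gmul : G -> G -> G) (val : K -> option G) : Prop :=
  [/\ (forall x, val x = None <-> x = 0),
      (forall x y, val (x * y) = omul gmul (val x) (val y)),
      (forall x y, ole (omin (val x) (val y)) (val (x + y))) &
      (forall g : G, exists x, val x = Some g)].

Definition in_B (K : fieldType) (d : Order.disp_t) (G : orderType d)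
    (e : G) (val : K -> option G) (x : K) : Prop := ole (Some e) (val x).

Definition in_Bunit (K : fieldType) (d : Order.disp_t) (G : orderType d)
    (e : G) (val : K -> option G) (x : K) : Prop := val x = Some e.

(* [pi] (given as a total function on K, only its restriction to B matters)
   is a residue map B -> F: a surjective ring morphism on B whose kernel is
   the maximal ideal {x : val x > e}. *)
Definition is_residue_map (K : fieldType) (d : Order.disp_t) (G : orderType d)
    (e : G) (val : K -> option G) (F : fieldType) (pi : K -> F) : Prop :=
  [/\ pi 1 = 1,
      (forall x y, in_B e val x -> in_B e val y -> pi (x + y) = pi x + pi y),
      (forall x y, in_B e val x -> in_B e val y -> pi (x * y) = pi x * pi y),
      (forall x, in_B e val x -> (pi x = 0 <-> val x <> Some e)) &
      (forall c : F, exists2 x, in_B e val x & pi x = c)].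

Definition strict_unit (K : fieldType) (d : Order.disp_t) (G : orderType d)
    (e : G) (val : K -> option G) (F : fieldType) (pi : K -> F) (x : K) : Prop :=
  in_Bunit e val x /\ pi x = 1.

(* Main.v *)
Require Import Defs.
From HB Require Import structures.
From mathcomp Require Import all_boot all_order all_algebra.
Import Order.TTheory GRing.Theory Num.Theory.
Local Open Scope ring_scope.

Theorem mainTheorem18
  (d : Order.disp_t) (G : orderType d)
  (gmul : G -> G -> G) (e : G) (ginv : G -> G)
  (HG : is_ordered_abgroup gmul e ginv)
  (K : fieldType) (val : K -> option G)
  (Hval : is_valuation gmul val)
  (F : fieldType) (pi : K -> F)
  (Hpi : is_residue_map e val pi)
  (Hchar : 2%N \in [pchar F])
  (Hsqrt : forall x : K, strict_unit e val pi x -> exists y : K, y ^+ 2 = x)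
  (A : {pred K})
  (HA : subring_closed A)
  (HBA : forall x : K, in_B e val x -> x \in A) :
  forall x : K, x != 0 -> ~ in_Bunit e val x ->
    (exists u v : K, x = u ^+ 2 + v ^+ 2 /\
        val u = omin (Some e) (val x) /\ val v = omin (Some e) (val x)) /\
    (x \in A -> exists u v : K, [/\ u \in A, v \in A, x = u ^+ 2 + v ^+ 2,
        val u = omin (Some e) (val x) & val v = omin (Some e) (val x)]).
Proof.
case: HG => gA gC g1 gV gmono.
case: Hval => v0 vM vD vS.
case: Hpi => p1 pD pM p0 pS.
case: HA => A1 AB AM.
have gr1 : forall a, gmul a e = a by move=> a; rewrite gC g1.
have sq_e : forall h, gmul h h = e -> h = e.
  move=> h hh; case: (ltgtP h e) => // H.
  - have := gmono _ _ h (ltW H); rewrite hh gr1.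
    by rewrite leNgt H.
  - have := gmono _ _ h (ltW H); rewrite hh gr1.
    by rewrite leNgt H.
have vnz : forall y, y != 0 -> exists h, val y = Some h.
  move=> y y0; case E: (val y) => [h|]; first by exists h.
  by move/v0: E => E; rewrite E eqxx in y0.
have val1 : val 1 = Some e.
  have [h E] := vnz 1 (oner_neq0 _).
  have := vM 1 1; rewrite mulr1 E /= => -[hh].
  have : gmul (ginv h) (gmul h h) = gmul (ginv h) h by rewrite -hh.
  by rewrite gA gV g1 => ->.
have valsq : forall y, val (y ^+ 2) = Some e -> val y = Some e.
  move=> y Hy; have y0 : y != 0.
    apply/eqP => y0; move: Hy; rewrite y0 expr0n /=.
    by move/(proj2 (v0 0)): (erefl (0:K)) => ->.
  have [h E] := vnz y y0; move: Hy; rewrite expr2 vM E /= => -[/sq_e ->] //.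
have valN1 : val (-1) = Some e.
  by apply: valsq; rewrite sqrrN expr1n.
have inB_add : forall y z, in_B e val y -> in_B e val z -> in_B e val (y + z).
  move=> y z; rewrite /in_B; have := vD y z.
  case: (val y) => [a|]; case: (val z) => [b|]; case: (val (y+z)) => [c|] //=.
  - by move=> H ha hb; apply: le_trans H; rewrite le_min ha hb.
  - by move=> H ha _; apply: le_trans H.
  - by move=> H _ hb; apply: le_trans H.
have inB1 : in_B e val 1 by rewrite /in_B val1 /=.
have inBN1 : in_B e val (-1) by rewrite /in_B valN1 /=.
have inB0 : in_B e val 0 by rewrite /in_B (proj2 (v0 0) (erefl _)).
have pi0 : pi 0 = 0.
  have h := pD 0 0 inB0 inB0; rewrite addr0 -{1}(addr0 (pi 0)) in h.
  by move/addrI: h => <-.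
have two0 : (1 + 1 : F) = 0 by move: (pcharf0 Hchar); rewrite mulr2n.
have piN1 : pi (-1) = 1.
  have := pD 1 (-1) inB1 inBN1; rewrite subrr pi0 p1 => /esym/eqP.
  rewrite addr_eq0 => /eqP H; rewrite -[pi (-1)]opprK -H; apply/eqP; by rewrite eq_sym -addr_eq0 two0.
have strict : forall s, in_B e val s -> pi s = 1 -> exists b, b ^+ 2 = s /\ val b = Some e.
  move=> s sB ps.
  have vs : val s = Some e.
    case: (eqVneq (val s) (Some e)) => // /eqP H.
    by move: (proj2 (p0 s sB) H); rewrite ps => /eqP; rewrite oner_eq0.
  have [b Hb] := Hsqrt s (conj vs ps).
  by exists b; split=> //; apply: valsq; rewrite Hb.
move=> x x0 xnu.
have [g Ex] := vnz x x0.
have gne : g != e by apply/eqP => ge; apply: xnu; rewrite /in_Bunit Ex ge.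
rewrite Ex /=.
case: (ltgtP g e) => Hg; last by rewrite Hg eqxx in gne.
-
  have xi0 : x^-1 != 0 by rewrite invr_eq0.
  have [h Exi] := vnz _ xi0.
  have gh : gmul g h = e.
    by have := vM x x^-1; rewrite mulfV // val1 Ex Exi /= => -[].
  have Hh : (e < h)%O.
    case: (ltgtP h e) => // H.
    - have := gmono _ _ g (ltW H); rewrite gh gr1.
      by rewrite leNgt Hg.
    - by move: gh; rewrite H gr1 => gE; rewrite gE eqxx in gne.
  have xiB : in_B e val x^-1 by rewrite /in_B Exi /= ltW.
  have pxi : pi x^-1 = 0.
    by apply/(p0 _ xiB); rewrite Exi => -[he]; rewrite he ltxx in Hh.
  have := strict (x^-1 - 1) (inB_add _ _ xiB inBN1).
  rewrite pD // pxi piN1 add0r => /(_ erefl) [b [Hb vb]].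
  have eqx : x = x ^+ 2 + (x * b) ^+ 2.
    by rewrite exprMn Hb mulrBr mulr1 addrC subrK expr2 mulfK.
  have vxb : val (x * b) = Some g by rewrite vM Ex vb /= gr1.
  split; first by exists x, (x * b).
  move=> xA; exists x, (x * b); split=> //.
  by apply: AM => //; apply: HBA; rewrite /in_B vb /=.
-
  have xB : in_B e val x by rewrite /in_B Ex /= ltW.
  have px : pi x = 0 by apply/(p0 _ xB); rewrite Ex => -[ge]; rewrite ge eqxx in gne.
  have := strict (x - 1) (inB_add _ _ xB inBN1).
  rewrite pD // px piN1 add0r => /(_ erefl) [b [Hb vb]].
  have eqx : x = 1 ^+ 2 + b ^+ 2 by rewrite Hb expr1n addrC subrK.
  split; first by exists 1, b.
  move=> xA; exists 1, b; split=> //.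
  by apply: HBA; rewrite /in_B vb /=.
Qed.
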